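(* Let $X$ be a real Banach space with the Ball Huskable Property ($BHP$). Then for every separable closed subspace $Y$ of $X$ there exists a separable closed subspace $Z$ of $X$ with $Y\subseteq Z$ such that $Z$ has $BHP$.
   Context: For a real Banach space $X$, $B_X$ denotes its closed unit ball. $X$ has the Ball Huskable Property ($BHP$) if for every $\varepsilon>0$ there is a nonempty relatively weakly open subset of $B_X$ (i.e., a nonempty set of the form $U\cap B_X$ with $U$ open in the weak topology of $X$) of diameter less than $\varepsilon$. *)

(* Defs.v *)
From HB Require Import structures.
From mathcomp Require Import all_boot all_order all_algebra.
From mathcomp Require Import all_classical all_reals all_analysis.
Set Implicit Arguments. Unset Strict Implicit. Unset Printing Implicit Defensive.
Import Order.TTheory GRing.Theory Num.Theory.
Import numFieldNormedType.Exports.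
Local Open Scope classical_set_scope.
Local Open Scope ring_scope.

Section BHPDefs.
Context {R : realType} {X : normedModType R}.

Definition lin_subspace (Y : set X) : Prop :=
  Y 0 /\ (forall x y, Y x -> Y y -> Y (x + y)) /\
  (forall (a : R) x, Y x -> Y (a *: x)).

Definition separable_set (Y : set X) : Prop :=
  exists D : set X, countable D /\ D `<=` Y /\ Y `<=` closure D.

(* f (a function on X, only its restriction to Z matters) is a continuous
   linear functional on the subspace Z, i.e. an element of Z^* *)
Definition dual_on (Z : set X) (f : X -> R) : Prop :=
  (forall (a : R) x y, Z x -> Z y -> f (a *: x + y) = a * f x + f y) /\
  {within Z, continuous f}.

(* U is open in the weak topology sigma(Z, Z^* ) of the subspace Z *)
Definition weakly_open_in (Z : set X) (U : set X) : Prop :=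
  U `<=` Z /\
  forall x, U x -> exists (n : nat) (fs : 'I_n -> X -> R) (e : R),
    0 < e /\ (forall i, dual_on Z (fs i)) /\
    forall y, Z y -> (forall i, `|fs i y - fs i x| < e) -> U y.

Definition unit_ball_in (Z : set X) : set X := [set z | Z z /\ `|z| <= 1].

Definition diam_lt (S : set X) (e : R) : Prop :=
  exists d : R, d < e /\ forall x y, S x -> S y -> `|x - y| <= d.

Definition BHP_on (Z : set X) : Prop :=
  forall e : R, 0 < e -> exists U : set X,
    weakly_open_in Z U /\ (U `&` unit_ball_in Z) !=set0 /\
    diam_lt (U `&` unit_ball_in Z) e.

End BHPDefs.

Definition BHP {R : realType} (X : normedModType R) : Prop :=
  BHP_on (@setT X).

(* Main.v *)
Set Warnings "-all".
Require Import Defs.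
From HB Require Import structures.
From mathcomp Require Import all_boot all_order all_algebra.
From mathcomp Require Import all_classical all_reals all_analysis.
From mathcomp Require Import ring lra.
Import Order.TTheory GRing.Theory Num.Theory.
Import numFieldNormedType.Exports.
Local Open Scope classical_set_scope.
Local Open Scope ring_scope.

Section Helpers.
Context {R : realType} {X : normedModType R}.

Lemma closure_normP (A : set X) x :
  closure A x <-> forall e : R, 0 < e -> exists a, A a /\ `|x - a| < e.
Proof.
split.
- move=> cx e e0.
  have := cx _ ((@nbhsx_ballx _ _ x e e0)) => -[a [Aa ba]].
  by exists a; split => //; rewrite -ball_normE in ba.
- move=> H B /nbhs_ballP[e e0 sB].
  have [a [Aa ha]] := H e e0.
  exists a; split => //; apply: sB; by rewrite -ball_normE.
Qed.

Lemma closure_lin (S : set X) : lin_subspace S -> lin_subspace (closure S).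
Proof.
move=> [S0 [SD SZ]]; split; first exact: subset_closure.
split.
- move=> x y /closure_normP cx /closure_normP cy; apply/closure_normP => e e0.
  have e20 : 0 < e / 2 by rewrite divr_gt0.
  have [a [Sa ha]] := cx _ e20; have [b [Sb hb]] := cy _ e20.
  exists (a + b); split; first exact: SD.
  rewrite (_ : x + y - (a + b) = (x - a) + (y - b)); last by rewrite opprD addrACA.
  apply: (le_lt_trans (ler_normD _ _)).
  by rewrite (splitr e) ltrD.
- move=> c x /closure_normP cx; apply/closure_normP => e e0.
  have d0 : 0 < e / (`|c| + 1) by rewrite divr_gt0 // ltr_wpDl.
  have [a [Sa ha]] := cx _ d0.
  exists (c *: a); split; first exact: SZ.
  rewrite -scalerBr normrZ.
  apply: (le_lt_trans (y := (`|c| + 1) * `|x - a|)).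
    by rewrite ler_wpM2r // lerDl.
  by rewrite mulrC -ltr_pdivlMr // ltr_wpDl.
Qed.

Lemma rat_approx (r d : R) : 0 < d -> exists q : rat, `|r - ratr q| < d.
Proof.
move=> d0.
have [] := @dense_rat R (ball r d) _ (ball_open _ _).
  by exists r; exact: ballxx.
move=> y [bd [q _ qy]]; exists q; rewrite qy; by rewrite -ball_normE in bd.
Qed.


Definition spanS (Y : set X) (x : nat -> X) : set X :=
  [set z | exists y n (a : nat -> R), Y y /\ z = y + \sum_(0 <= i < n) a i *: x i].

Lemma sum_pad (x : nat -> X) (a : nat -> R) m n : (m <= n)%N ->
  \sum_(0 <= i < n) (if (i < m)%N then a i else 0) *: x i =
  \sum_(0 <= i < m) a i *: x i.
Proof.
move=> mn; rewrite (big_cat_nat (leq0n m) mn) /=.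
have -> : \sum_(m <= i < n) (if (i < m)%N then a i else 0) *: x i = 0.
  rewrite big_nat_cond big1 // => i /andP[/andP[mi _] _].
  by rewrite ltnNge mi scale0r.
rewrite addr0; apply: eq_big_nat => i /andP[_ ilt]; by rewrite ilt.
Qed.

Lemma span_lin (Y : set X) (x : nat -> X) : lin_subspace Y -> lin_subspace (spanS Y x).
Proof.
move=> [Y0 [YD YZ]]; split.
  by exists 0, 0%N, (fun _ => 0); split => //; rewrite big_geq // addr0.
split.
- move=> _ _ [y1 [n1 [a1 [Y1 ->]]]] [y2 [n2 [a2 [Y2 ->]]]].
  exists (y1 + y2), (maxn n1 n2),
    (fun i => (if (i < n1)%N then a1 i else 0) + (if (i < n2)%N then a2 i else 0)).
  split; first exact: YD.
  rewrite [in RHS](eq_bigr (fun i => (if (i < n1)%N then a1 i else 0) *: x i +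
     (if (i < n2)%N then a2 i else 0) *: x i)); last by move=> i _; rewrite scalerDl.
  rewrite big_split /= !sum_pad ?leq_maxl ?leq_maxr //.
  by rewrite addrACA.
- move=> c _ [y [n [a [Yy ->]]]].
  exists (c *: y), n, (fun i => c * a i); split; first exact: YZ.
  rewrite scalerDr scaler_sumr; congr (_ + _).
  by apply: eq_bigr => i _; rewrite scalerA.
Qed.

Lemma approx_sum n (a : nat -> R) (x : nat -> X) (e : R) : 0 < e ->
  exists q : nat -> rat,
  `|\sum_(0 <= i < n) a i *: x i - \sum_(0 <= i < n) ratr (q i) *: x i| < e.
Proof.
elim: n e => [|n IH] e e0.
  by exists (fun _ => 0); rewrite !big_geq // subrr normr0.
have e20 : 0 < e / 2 by rewrite divr_gt0.
have [q hq] := IH _ e20.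
have d0 : 0 < e / 2 / (`|x n| + 1) by rewrite divr_gt0 // ltr_wpDl.
have [r hr] := rat_approx (a n) _ d0.
exists (fun i => if i == n then r else q i).
rewrite !big_nat_recr //= eqxx.
have -> : \sum_(0 <= i < n) ratr (if i == n then r else q i) *: x i =
    \sum_(0 <= i < n) ratr (q i) *: x i.
  by apply: eq_big_nat => i /andP[_ ilt]; rewrite ltn_eqF.
rewrite (_ : forall A B C D : X, A + C - (B + D) = (A - B) + (C - D)); last first.
  by move=> A B C D; rewrite opprD addrACA.
apply: (le_lt_trans (ler_normD _ _)).
rewrite (splitr e) ltrD //.
rewrite -scalerBl normrZ.
apply: (le_lt_trans (y := `|a n - ratr r| * (`|x n| + 1))).
  by rewrite ler_wpM2l // lerDl.
by rewrite -ltr_pdivlMr // ltr_wpDl.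
Qed.

End Helpers.

Lemma alg_id (V : zmodType) (z y d A B : V) :
  z - (d + B) = (z - (y + A)) + ((y - d) + (A - B)).
Proof.
rewrite -addrA; congr (_ + _).
by rewrite !opprD [y - d + _]addrACA -[- y - A]opprD addKr.
Qed.

Theorem mainTheorem3 (R : realType) (X : completeNormedModType R) :
  BHP X ->
  forall Y : set X, lin_subspace Y -> closed Y -> separable_set Y ->
  exists Z : set X, lin_subspace Z /\ closed Z /\ separable_set Z /\
    Y `<=` Z /\ BHP_on Z.
Proof.
move=> hB Y linY clY [DY [cDY [DYY YDY]]].
have : forall k : nat, exists p : set X * X,
    weakly_open_in setT p.1 /\ (p.1 `&` unit_ball_in setT) p.2 /\
    diam_lt (p.1 `&` unit_ball_in setT) (k.+1%:R^-1).
  move=> k; have [U [wU [[z Uz] dU]]] := hB (k.+1%:R^-1) ltac:(by rewrite invr_gt0).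
  by exists (U, z).
move=> /choice[pf hpf].
pose x k := (pf k).2.
pose S := spanS Y x.
have linS : lin_subspace S by exact: span_lin.
exists (closure S); split; first exact: closure_lin.
split; first exact: closed_closure.
have YS : Y `<=` S.
  by move=> y Yy; exists y, 0%N, (fun _ => 0); split => //; rewrite big_geq // addr0.
have xS : forall k, S (x k).
  move=> k; exists 0, k.+1, (fun i => (i == k)%:R); split; first by case: linY.
  rewrite big_nat_recr //= eqxx scale1r big1_seq ?add0r //.
  move=> i /andP[_]; rewrite mem_index_iota => /andP[_ ik].
  by rewrite ltn_eqF // scale0r.
split.
  pose f (p : X * seq rat) := p.1 + \sum_(0 <= i < size p.2) ratr (nth 0 p.2 i) *: x i.
  exists (f @` (DY `*` [set: seq rat])); split.
    apply: card_le_trans (card_image_le f _) _.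
    exact: countableX cDY (countableP _).
  split.
    move=> _ [[d t] [/= Dd _] <-]; apply: subset_closure.
    by exists d, (size t), (fun i => ratr (nth 0 t i)); split => //; exact: DYY.
  move=> z /closure_normP cz; apply/closure_normP => e e0.
  have e20 : 0 < e / 2 by rewrite divr_gt0.
  have [_ [[y [n [a [Yy ->]]]] hs]] := cz _ e20.
  have e40 : 0 < e / 4 by rewrite divr_gt0.
  have [d [Dd hd]] := (closure_normP _ _).1 (YDY _ Yy) _ e40.
  have [q hq] := approx_sum n a x _ e40.
  exists (f (d, mkseq q n)); split; first by exists (d, mkseq q n).
  rewrite /f /= size_mkseq.
  have -> : \sum_(0 <= i < n) ratr (nth 0 (mkseq q n) i) *: x i =
      \sum_(0 <= i < n) ratr (q i) *: x i.
    by apply: eq_big_nat => i /andP[_ ilt]; rewrite nth_mkseq.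
  rewrite (alg_id _ z y _ (\sum_(0 <= i < n) a i *: x i)).
  apply: (le_lt_trans (ler_normD _ _)).
  apply: (lt_le_trans (ltrD hs (le_lt_trans (ler_normD _ _) (ltrD hd hq)))).
  lra.
split.
  by move=> y Yy; apply: subset_closure; exact: YS.
move=> e e0.
have [k hk] : exists k : nat, k.+1%:R^-1 < e.
  exists (Num.truncn e^-1).
  have := truncnS_gt (e^-1); set m := (Num.truncn _).+1%:R => hm.
  have m0 : 0 < m by apply: lt_trans hm; rewrite invr_gt0.
  rewrite -(ltf_pV2 (F:=R)) ?invrK // posrE ?invr_gt0 //.
have [wU [Uz dU]] := hpf k.
exists ((pf k).1 `&` closure S); split.
  split; first by move=> ? [].
  move=> w [Uw Zw]; have [n [fs [e' [e'0 [hf hy]]]]] := wU.2 w Uw.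
  exists n, fs, e'; split => //; split.
    move=> i; have [lin cont] := hf i; split.
      by move=> c u v _ _; exact: lin.
    exact: continuous_subspaceW (@subsetT _ _) cont.
  by move=> y Zy hyy; split => //; apply: hy.
split.
  case: Uz => Ux [_ nx].
  exists (x k); split; first split => //.
    exact/subset_closure/xS.
  by split => //; exact/subset_closure/xS.
case: dU => d [dlt hd]; exists d; split; first exact: lt_trans dlt hk.
move=> u v [[Uu _] [_ nu]] [[Uv _] [_ nv]]; apply: hd; split => //.

Qed.
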